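(* Let $\mathcal H$ be a separable complex Hilbert space, $C\in L(\mathcal H)$, $A=C^*C$, and $\mathcal S$ a closed subspace such that $(A,\mathcal S)$ is compatible. Then for every nonzero $x\in\mathcal H$, $$sp(C,\mathcal S,x)=\{(I-T)x:\ T\in\Pi(A,\mathcal S)\}.$$
   Context: $sp(C,\mathcal S,x)=\{y\in x+\mathcal S:\ \|Cy\|=\inf_{s\in\mathcal S}\|C(x+s)\|\}$ (the set of abstract splines). $(A,\mathcal S)$ is compatible if there exists $Q\in L(\mathcal H)$ with $Q^2=Q$, $R(Q)=\mathcal S$, $AQ=Q^*A$. $\Pi(A,\mathcal S)$ is the set of $T\in L(\mathcal H)$ with $R(T)\subseteq\mathcal S$ and $\|y-Ty\|_A\le\|y-s\|_A$ for all $y\in\mathcal H$, $s\in\mathcal S$, where $\|z\|_A=\langle Az,z\rangle^{1/2}$. *)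

(* Defs.v *)
From mathcomp Require Import all_boot all_algebra.
From mathcomp Require Export complex.
From mathcomp Require Export reals classical_sets.
Set Implicit Arguments.
Unset Strict Implicit.
Unset Printing Implicit Defensive.
Import GRing.Theory Num.Theory.
Local Open Scope ring_scope.
Local Open Scope classical_set_scope.

Section Hilbert.
Variables (R : realType) (V : lmodType R[i]).

Definition inner_product (ip : V -> V -> R[i]) : Prop :=
  [/\ (forall (a : R[i]) (x y z : V), ip (a *: x + y) z = a * ip x z + ip y z),
      (forall x y : V, ip y x = (ip x y)^*),
      (forall x : V, 0 <= ip x x) &
      (forall x : V, ip x x = 0 -> x = 0)].

Definition hnorm (ip : V -> V -> R[i]) (x : V) : R := Num.sqrt (@complex.Re R (ip x x)).

Definition cauchy_seq (ip : V -> V -> R[i]) (u : nat -> V) : Prop :=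
  forall eps : R, 0 < eps -> exists N : nat, forall m n : nat,
    (N <= m)%N -> (N <= n)%N -> hnorm ip (u m - u n) < eps.

Definition converges_to (ip : V -> V -> R[i]) (u : nat -> V) (l : V) : Prop :=
  forall eps : R, 0 < eps -> exists N : nat, forall n : nat,
    (N <= n)%N -> hnorm ip (u n - l) < eps.

Definition separable_hilbert (ip : V -> V -> R[i]) : Prop :=
  [/\ inner_product ip,
      (forall u : nat -> V, cauchy_seq ip u -> exists l, converges_to ip u l) &
      (exists d : nat -> V, forall (x : V) (eps : R), 0 < eps ->
          exists n : nat, hnorm ip (x - d n) < eps)].

Definition bounded_op (ip : V -> V -> R[i]) (T : V -> V) : Prop :=
  (forall (a : R[i]) (x y : V), T (a *: x + y) = a *: T x + T y) /\
  exists M : R, forall x : V, hnorm ip (T x) <= M * hnorm ip x.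

Definition is_adjoint (ip : V -> V -> R[i]) (T Ts : V -> V) : Prop :=
  forall x y : V, ip (T x) y = ip x (Ts y).

Definition closed_subspace (ip : V -> V -> R[i]) (S : set V) : Prop :=
  [/\ S 0,
      (forall (a : R[i]) (x y : V), S x -> S y -> S (a *: x + y)) &
      (forall (u : nat -> V) (l : V), (forall n, S (u n)) ->
          converges_to ip u l -> S l)].

Definition compatible (ip : V -> V -> R[i]) (A : V -> V) (S : set V) : Prop :=
  exists Q : V -> V, [/\ bounded_op ip Q,
      (forall x, Q (Q x) = Q x),
      range Q = S &
      exists Qs : V -> V, is_adjoint ip Q Qs /\
        (forall x, A (Q x) = Qs (A x))].

Definition Anorm (ip : V -> V -> R[i]) (A : V -> V) (z : V) : R :=
  Num.sqrt (@complex.Re R (ip (A z) z)).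

Definition Pi (ip : V -> V -> R[i]) (A : V -> V) (S : set V) : set (V -> V) :=
  [set T | [/\ bounded_op ip T, range T `<=` S &
     forall y s : V, S s -> Anorm ip A (y - T y) <= Anorm ip A (y - s)]].

Definition sp (ip : V -> V -> R[i]) (C : V -> V) (S : set V) (x : V) : set V :=
  [set y | (exists2 s, S s & y = x + s) /\
     hnorm ip (C y) = inf [set hnorm ip (C (x + s)) | s in S]].

End Hilbert.

(* Main.v *)
Require Import Defs.
From mathcomp Require Import all_boot all_order all_algebra.
From mathcomp Require Import complex reals classical_sets.
From mathcomp Require Import ring.
Import Order.TTheory GRing.Theory Num.Theory.
Local Open Scope ring_scope.
Local Open Scope classical_set_scope.

Lemma ip0l {R : realType} {V : lmodType R[i]} {ip : V -> V -> R[i]} :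
  inner_product ip -> forall z, ip 0 z = 0.
Proof.
case=> lin _ _ _ z. have := lin 1 0 0 z. rewrite scale1r addr0 mul1r.
by move=> e; apply: (addrI (ip 0 z)); rewrite addr0 -e.
Qed.

Lemma ipDl {R : realType} {V : lmodType R[i]} {ip : V -> V -> R[i]} :
  inner_product ip -> forall x y z, ip (x + y) z = ip x z + ip y z.
Proof. move=> h x y z; case: (h) => lin _ _ _. by rewrite -[x]scale1r lin mul1r scale1r. Qed.

Lemma ipZl {R : realType} {V : lmodType R[i]} {ip : V -> V -> R[i]} :
  inner_product ip -> forall a x z, ip (a *: x) z = a * ip x z.
Proof. move=> h a x z; case: (h) => lin _ _ _. by rewrite -[a *: x]addr0 lin (ip0l h) addr0. Qed.

Lemma ipNl {R : realType} {V : lmodType R[i]} {ip : V -> V -> R[i]} :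
  inner_product ip -> forall x z, ip (- x) z = - ip x z.
Proof. move=> h x z. by rewrite -scaleN1r (ipZl h) mulN1r. Qed.

Lemma ipBl {R : realType} {V : lmodType R[i]} {ip : V -> V -> R[i]} :
  inner_product ip -> forall x y z, ip (x - y) z = ip x z - ip y z.
Proof. move=> h x y z. by rewrite (ipDl h) (ipNl h). Qed.

Lemma ipC {R : realType} {V : lmodType R[i]} {ip : V -> V -> R[i]} :
  inner_product ip -> forall x y, ip y x = (ip x y)^*.
Proof. by case. Qed.

Lemma ip0r {R : realType} {V : lmodType R[i]} {ip : V -> V -> R[i]} :
  inner_product ip -> forall z, ip z 0 = 0.
Proof. move=> h z. by rewrite (ipC h) (ip0l h) conjC0. Qed.

Lemma ipDr {R : realType} {V : lmodType R[i]} {ip : V -> V -> R[i]} :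
  inner_product ip -> forall x y z, ip z (x + y) = ip z x + ip z y.
Proof. move=> h x y z. by rewrite (ipC h) (ipDl h) rmorphD /= -!(ipC h). Qed.

Lemma ipZr {R : realType} {V : lmodType R[i]} {ip : V -> V -> R[i]} :
  inner_product ip -> forall a x z, ip z (a *: x) = a^* * ip z x.
Proof. move=> h a x z. by rewrite (ipC h) (ipZl h) rmorphM /= -!(ipC h). Qed.

Lemma ipNr {R : realType} {V : lmodType R[i]} {ip : V -> V -> R[i]} :
  inner_product ip -> forall x z, ip z (- x) = - ip z x.
Proof. move=> h x z. by rewrite (ipC h) (ipNl h) rmorphN /= -!(ipC h). Qed.

Lemma ipBr {R : realType} {V : lmodType R[i]} {ip : V -> V -> R[i]} :
  inner_product ip -> forall x y z, ip z (x - y) = ip z x - ip z y.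
Proof. move=> h x y z. by rewrite (ipDr h) (ipNr h). Qed.

Lemma ipge0 {R : realType} {V : lmodType R[i]} {ip : V -> V -> R[i]} :
  inner_product ip -> forall z, 0 <= ip z z.
Proof. by case. Qed.

Lemma ipRe {R : realType} {V : lmodType R[i]} {ip : V -> V -> R[i]} :
  inner_product ip -> forall z, real_complex R (complex.Re (ip z z)) = ip z z.
Proof. move=> h z. apply: RRe_real. exact: ger0_real (ipge0 h z). Qed.

Lemma ipJ {R : realType} {V : lmodType R[i]} {ip : V -> V -> R[i]} :
  inner_product ip -> forall z, (ip z z)^* = ip z z.
Proof. move=> h z. apply: conj_Creal. exact: ger0_real (ipge0 h z). Qed.

Lemma hnorm_ge0 {R : realType} {V : lmodType R[i]} {ip : V -> V -> R[i]} z :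
  0 <= hnorm ip z.
Proof. exact: sqrtr_ge0. Qed.

Lemma hnorm_le {R : realType} {V : lmodType R[i]} {ip : V -> V -> R[i]} :
  inner_product ip -> forall (k : R) a b, 0 <= k -> ip a a <= real_complex R k * ip b b ->
  hnorm ip a <= Num.sqrt k * hnorm ip b.
Proof.
move=> h k a b k0 le. rewrite /hnorm -sqrtrM //. apply: ler_wsqrtr.
move: le; rewrite -(ipRe h a) -(ipRe h b) -rmorphM /= lecR //.
Qed.

Lemma hnorm_le1 {R : realType} {V : lmodType R[i]} {ip : V -> V -> R[i]} :
  inner_product ip -> forall a b, (ip a a <= ip b b) = (hnorm ip a <= hnorm ip b).
Proof.
move=> h a b. rewrite /hnorm ler_sqrt; last first.
  by rewrite -lecR (ipRe h) ipge0.
by rewrite -lecR !(ipRe h).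
Qed.

Lemma hnorm_eq {R : realType} {V : lmodType R[i]} {ip : V -> V -> R[i]} :
  inner_product ip -> forall a b, ip a a = ip b b -> hnorm ip a = hnorm ip b.
Proof. by move=> h a b e; rewrite /hnorm e. Qed.

Lemma nsqD {R : realType} {V : lmodType R[i]} {ip : V -> V -> R[i]} :
  inner_product ip -> forall a b,
  ip (a + b) (a + b) = ip a a + ip b b + (ip a b + ip b a).
Proof. move=> h a b. rewrite (ipDl h) !(ipDr h). ring. Qed.

Lemma nsqB {R : realType} {V : lmodType R[i]} {ip : V -> V -> R[i]} :
  inner_product ip -> forall a b,
  ip (a - b) (a - b) = ip a a + ip b b - (ip a b + ip b a).
Proof.
move=> h a b. rewrite (nsqD h) (ipNl h) (ipNr h) (ipNl h) (ipNr h) opprK.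
by rewrite opprD.
Qed.

Lemma pyth {R : realType} {V : lmodType R[i]} {ip : V -> V -> R[i]} :
  inner_product ip -> forall a b, ip a b = 0 ->
  ip (a + b) (a + b) = ip a a + ip b b.
Proof. move=> h a b e. by rewrite (nsqD h) e (ipC h a b) e conjC0 !addr0. Qed.

Lemma par {R : realType} {V : lmodType R[i]} {ip : V -> V -> R[i]} :
  inner_product ip -> forall a b,
  ip (a + b) (a + b) <= 2%:R * ip a a + 2%:R * ip b b.
Proof.
move=> h a b. rewrite -subr_ge0.
have -> : 2%:R * ip a a + 2%:R * ip b b - ip (a + b) (a + b) = ip (a - b) (a - b).
  rewrite (nsqB h) (nsqD h). set p := ip a a; set q := ip b b; set r := ip a b + ip b a.
  by ring.
exact: ipge0.
Qed.

Lemma nsqZ {R : realType} {V : lmodType R[i]} {ip : V -> V -> R[i]} :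
  inner_product ip -> forall c a, ip (c *: a) (c *: a) = `|c| ^+ 2 * ip a a.
Proof. move=> h c a. by rewrite (ipZl h) (ipZr h) mulrA normCK. Qed.

Lemma opD {R : realType} {V : lmodType R[i]} {ip : V -> V -> R[i]} {T : V -> V} :
  bounded_op ip T -> forall x y, T (x + y) = T x + T y.
Proof. case=> lin _ x y. by rewrite -[x]scale1r lin !scale1r. Qed.

Lemma op0 {R : realType} {V : lmodType R[i]} {ip : V -> V -> R[i]} {T : V -> V} :
  bounded_op ip T -> T 0 = 0.
Proof.
move=> h. have := opD h 0 0. rewrite addr0 => e.
by apply: (addrI (T 0)); rewrite addr0 -e.
Qed.

Lemma opZ {R : realType} {V : lmodType R[i]} {ip : V -> V -> R[i]} {T : V -> V} :
  bounded_op ip T -> forall a x, T (a *: x) = a *: T x.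
Proof. move=> h a x; case: (h) => lin _. by rewrite -[a *: x]addr0 lin (op0 h) addr0. Qed.

Lemma opN {R : realType} {V : lmodType R[i]} {ip : V -> V -> R[i]} {T : V -> V} :
  bounded_op ip T -> forall x, T (- x) = - T x.
Proof. move=> h x. by rewrite -scaleN1r (opZ h) scaleN1r. Qed.

Lemma opB {R : realType} {V : lmodType R[i]} {ip : V -> V -> R[i]} {T : V -> V} :
  bounded_op ip T -> forall x y, T (x - y) = T x - T y.
Proof. move=> h x y. by rewrite (opD h) (opN h). Qed.

Lemma Re_ge0 {R : realType} {V : lmodType R[i]} {ip : V -> V -> R[i]} :
  inner_product ip -> forall z, 0 <= complex.Re (ip z z).
Proof. move=> h z. by rewrite -ler0c (ipRe h) ipge0. Qed.

Lemma hnorm_sqr {R : realType} {V : lmodType R[i]} {ip : V -> V -> R[i]} :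
  inner_product ip -> forall z, hnorm ip z * hnorm ip z = complex.Re (ip z z).
Proof. move=> h z. by rewrite /hnorm -expr2 sqr_sqrtr // Re_ge0. Qed.

Lemma bound_r1 {R : realType} {V : lmodType R[i]} {ip : V -> V -> R[i]} :
  inner_product ip -> forall Q, bounded_op ip Q -> forall x t, ip x x != 0 ->
  bounded_op ip (fun z => Q z - (ip z x / ip x x) *: t).
Proof.
move=> h Q bQ x t x0; split.
  move=> a u w. rewrite (opD bQ) (opZ bQ) (ipDl h) (ipZl h) mulrDl scalerDl scalerBr scalerA mulrA.
  by rewrite opprD addrACA.
case: (bQ) => _ [MQ hMQ].
set d := ip x x.
have d0 : 0 < d by rewrite lt0r x0 ipge0.
set K := 2%:R * real_complex R (MQ ^+ 2) + 2%:R * (ip t t / d).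
have K0 : 0 <= K.
  rewrite addr_ge0 // mulr_ge0 // ?ler0c ?sqr_ge0 // divr_ge0 // ?ipge0 // ltW //.
have KR := RRe_real (ger0_real K0).
exists (Num.sqrt (complex.Re K)) => z.
apply: (hnorm_le h); first by rewrite -ler0c KR.
rewrite KR.
set c := ip z x / d.
have hc : `|c| ^+ 2 * d <= ip z z.
  have e : z = c *: x + (z - c *: x) by rewrite addrC subrK.
  have o : ip (c *: x) (z - c *: x) = 0.
    rewrite (ipZl h) (ipC h (z - c *: x) x) (ipBl h) (ipZl h) /c divfK ?subrr ?conjC0 ?mulr0 //.
  rewrite [in X in _ <= X]e (pyth h _ _ o) (nsqZ h) lerDl ipge0 //.
apply: le_trans (par h _ _) _.
rewrite (ipNl h) (ipNr h) opprK (nsqZ h) /K [in X in _ <= X]mulrDl -[_ * real_complex R _ * _]mulrA -[_ * (ip t t / d) * _]mulrA.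
apply: lerD; rewrite ler_pM2l ?ltr0n //.
  have := hMQ z => hq.
  have : complex.Re (ip (Q z) (Q z)) <= MQ ^+ 2 * complex.Re (ip z z).
    rewrite -!(hnorm_sqr h) expr2 mulrACA.
    by apply: ler_pM => //; apply: hnorm_ge0.
  by rewrite -(ipRe h (Q z)) -(ipRe h z) -rmorphM -lecR /=.
have -> : `|c| ^+ 2 * ip t t = (`|c| ^+ 2 * d) * (ip t t / d).
  by rewrite -mulrA [d * _]mulrCA divff ?mulr1 // lt0r_neq0.
rewrite [ip t t / d * _]mulrC. apply: ler_wpM2r => //.
by rewrite divr_ge0 // ?ipge0 // ltW.
Qed.

Theorem mainTheorem11 (R : realType) (V : lmodType R[i]) (ip : V -> V -> R[i])
  (C Cs : V -> V) (S : set V) :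
  separable_hilbert ip ->
  bounded_op ip C ->
  is_adjoint ip C Cs ->
  closed_subspace ip S ->
  compatible ip (fun z => Cs (C z)) S ->
  forall x : V, x != 0 ->
    sp ip C S x = [set (x - T x) | T in Pi ip (fun z => Cs (C z)) S].
Proof.
move=> [hip _ _] bC adjC [S0 Slin _] [Q [bQ QQ rQ [Qs [adjQ AQ]]]] x x0.
have AQ' : forall w, Cs (C (Q w)) = Qs (Cs (C w)) := AQ.
have SN : forall s, S s -> S (- s).
  by move=> s Ss; have := Slin (-1) s 0 Ss S0; rewrite scaleN1r addr0.
have SD : forall a b, S a -> S b -> S (a + b).
  by move=> a b Sa Sb; have := Slin 1 a b Sa Sb; rewrite scale1r.
have SQ : forall y, S (Q y) by move=> y; rewrite -rQ; exists y.
have QS : forall t, S t -> Q t = t.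
  by move=> t; rewrite -rQ => -[w _ <-]; exact: QQ.
have Anorm_eq : forall z, Anorm ip (fun z => Cs (C z)) z = hnorm ip (C z).
  by move=> z; rewrite /Anorm /hnorm (ipC hip z) -adjC (ipJ hip).
have orth : forall y t, S t -> ip (C (y - Q y)) (C t) = 0.
  move=> y t St. rewrite adjC -(QS t St) AQ' -adjQ (opB bQ) QQ subrr.
  exact: ip0l.
have Qopt : forall y s, S s ->
    ip (C (y - Q y)) (C (y - Q y)) <= ip (C (y - s)) (C (y - s)).
  move=> y s Ss.
  have e : y - s = (y - Q y) + (Q y - s) by rewrite addrA subrK.
  rewrite e (opD bC (y - Q y)) (pyth hip _ _ (orth _ _ (SD _ _ (SQ y) (SN _ Ss)))).
  by rewrite lerDl ipge0.
have hLB : has_lbound [set hnorm ip (C (x + s)) | s in S].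
  by exists 0 => _ [s _ <-]; exact: hnorm_ge0.
have x0' : ip x x != 0.
  apply/eqP => e; move/eqP: x0; apply; case: (hip) => _ _ _; exact.
apply/seteqP; split.
  move=> y [[s0 Ss0 ->] hy].
  set t := Q x + s0.
  have St : S t by apply: SD.
  have e : x + s0 = (x - Q x) + t by rewrite /t addrA subrK.
  have Ct0 : C t = 0.
    have le1 : hnorm ip (C (x + s0)) <= hnorm ip (C (x - Q x)).
      rewrite hy; apply: (ge_inf hLB); exists (- Q x); first exact: SN.
      by [].
    rewrite -(hnorm_le1 hip) e (opD bC (x - Q x)) (pyth hip _ _ (orth _ _ St)) gerDl in le1.
    case: (hip) => _ _ _ def; apply: def.
    by apply/eqP; rewrite eq_le le1 ipge0.
  exists (fun z => Q z - (ip z x / ip x x) *: t).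
    split.
    - exact: bound_r1.
    - move=> _ [z _ <-]. rewrite -scaleNr addrC. exact: Slin.
    - move=> y' s Ss. rewrite !Anorm_eq.
      have -> : C (y' - (Q y' - (ip y' x / ip x x) *: t)) = C (y' - Q y').
        by rewrite opprB addrCA (opD bC (_ *: t)) (opZ bC) Ct0 scaler0 add0r.
      rewrite -(hnorm_le1 hip). exact: Qopt.
  by rewrite divff // scale1r /t opprB [Q x + s0 - _]addrAC subrr add0r.
move=> _ [T [bT rT opt] <-]. split.
  exists (- T x); last by [].
  by apply: SN; apply: rT; exists x.
apply: le_anti; apply/andP; split.
  apply: lb_le_inf.
    by exists (hnorm ip (C (x + 0))), 0.
  move=> _ [s Ss <-].
  have -> : x + s = x - (- s) by rewrite opprK.
  rewrite -(Anorm_eq (x - T x)) -(Anorm_eq (x - - s)).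
  exact: (opt x (- s) (SN s Ss)).
apply: (ge_inf hLB). exists (- T x); last by [].
by apply: SN; apply: rT; exists x.
Qed.
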